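(* Let \(S\) be an inverse semigroup with zero and unit, let \(E=E(S)\), and let \(\hat{E}\) carry the canonical action of \(S\) by the partial homeomorphisms \(c_g\colon U_{g^*g}\to U_{gg^*}\), \(c_g(\varphi)(e)=\varphi(g^*eg)\). Then this action is a terminal object in the category of actions of \(S\) on topological spaces: for every topological space \(X\) with an action of \(S\), there is a unique \(S\)-equivariant continuous map \(X\to\hat{E}\).
   Context: Inverse semigroups are assumed to have a zero \(0\) and a unit \(1\); homomorphisms preserve zero and unit. \(E=E(S)\) is the semilattice of idempotents of \(S\), ordered by \(e\le f\iff ef=e\). A character on \(E\) is a map \(\varphi\colon E\to\{0,1\}\) with \(\varphi(0)=0\), \(\varphi(1)=1\) and \(\varphi(ef)=\varphi(e)\varphi(f)\). \(\hat{E}\) is the set of characters. For \(e\in E\), \(U_e=\{\varphi\in\hat E:\varphi(e)=1\}\), and \(\hat{E}\) carries the topology generated by the sets \(U_e\). A partial homeomorphism of a space \(X\) is a homeomorphism between open subsets of \(X\). These form an inverse semigroup under composition of partial maps, with unit \(\mathrm{id}_X\) and zero the empty map. An action of \(S\) on a topological space \(X\) is a unit- and zero-preserving homomorphism from \(S\) to this inverse semigroup; write \(s\cdot x\) when defined. A map \(f\colon X\to Y\) between spaces with \(S\)-actions is \(S\)-equivariant if for all \(s\in S\), \(x\in X\): \(s\cdot x\) is defined iff \(s\cdot f(x)\) is defined, and then \(f(s\cdot x)=s\cdot f(x)\). *)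

(* Defs.v *)
From HB Require Import structures.
From mathcomp Require Import all_boot all_order.
From mathcomp Require Import all_classical topology.
Set Implicit Arguments. Unset Strict Implicit. Unset Printing Implicit Defensive.
Local Open Scope classical_set_scope.

(* Inverse semigroup with zero and unit: a regular *-semigroup
   (s s' s = s and s' s s' = s', with s' the star of s) whose idempotents commute. *)
Record invSemigroup := InvSemigroup {
  car :> Type;
  mul : car -> car -> car;
  star : car -> car;
  zero : car;
  one : car;
  mulA : forall a b c, mul a (mul b c) = mul (mul a b) c;
  mul_star : forall s, mul (mul s (star s)) s = s;
  star_mul : forall s, mul (mul (star s) s) (star s) = star s;
  idem_comm : forall e f, mul e e = e -> mul f f = f -> mul e f = mul f e;
  mul0s : forall s, mul zero s = zero;
  muls0 : forall s, mul s zero = zero;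
  mul1s : forall s, mul one s = s;
  muls1 : forall s, mul s one = s }.

Section InvSemigroupDefs.
Variable S : invSemigroup.
Local Notation "a * b" := (mul a b).


Definition idem := { e : S | e * e = e }.

Lemma idem0 : (zero S) * (zero S) = zero S.
Proof. by rewrite mul0s. Qed.
Lemma idem1 : (one S) * (one S) = one S.
Proof. by rewrite mul1s. Qed.
Definition idem_zero : idem := exist _ (zero S) idem0.
Definition idem_one : idem := exist _ (one S) idem1.

Lemma idem_mul_proof (e f : idem) : (proj1_sig e * proj1_sig f) * (proj1_sig e * proj1_sig f) = proj1_sig e * proj1_sig f.
Proof.
case: e f => e He [f Hf] /=.
by rewrite -mulA [f * (e * f)]mulA (idem_comm Hf He) -mulA Hf mulA He.
Qed.
Definition idem_mul (e f : idem) : idem := exist _ (proj1_sig e * proj1_sig f) (idem_mul_proof e f).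

Lemma sss_proof (s : S) : ((star s) * s) * ((star s) * s) = (star s) * s.
Proof. by rewrite mulA star_mul. Qed.
Definition idem_ss (s : S) : idem := exist _ ((star s) * s) (sss_proof s).

Lemma conj_proof (g : S) (e : idem) :
  ((star g) * proj1_sig e * g) * ((star g) * proj1_sig e * g) = (star g) * proj1_sig e * g.
Proof.
case: e => e He /=.
have Hgg : (g * (star g)) * (g * (star g)) = g * (star g) by rewrite mulA mul_star.
rewrite -!mulA [g * ((star g) * (e * g))]mulA [(g * (star g)) * (e * g)]mulA.
rewrite (idem_comm Hgg He) -[(e * (g * (star g))) * g]mulA -[g * (star g) * g]mulA.
rewrite [g * ((star g) * g)]mulA mul_star.
rewrite [(star g) * (e * (e * g))]mulA [(star g) * e * (e * g)]mulA -[(star g) * e * e]mulA He.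
by rewrite -mulA.
Qed.
Definition idem_conj (g : S) (e : idem) : idem := exist _ ((star g) * proj1_sig e * g) (conj_proof g e).

Definition is_character (phi : idem -> bool) : Prop :=
  [/\ phi idem_zero = false, phi idem_one = true &
      forall e f, phi (idem_mul e f) = phi e && phi f].

Definition hatE := { phi : idem -> bool | is_character phi }.

Definition U (e : idem) : set hatE := [set phi | proj1_sig phi e = true].

End InvSemigroupDefs.

Definition is_topology (T : Type) (tau : set (set T)) : Prop :=
  [/\ tau setT,
      forall A B, tau A -> tau B -> tau (A `&` B) &
      forall (I : Type) (F : I -> set T), (forall i, tau (F i)) -> tau (\bigcup_i F i)].

Definition generated_open (T : Type) (B : set (set T)) : set (set T) :=
  fun O => forall tau : set (set T), is_topology tau -> B `<=` tau -> tau O.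

Definition hatE_open (S : invSemigroup) : set (set (hatE S)) :=
  generated_open (fun O => exists e : idem S, O = U e).

Definition continuous_to_hatE (S : invSemigroup) (X : topologicalType)
  (f : X -> hatE S) : Prop :=
  forall O, hatE_open O -> open (f @^-1` O).

(* An action of S on X by partial homeomorphisms: s acts by the partial map
   act s with domain dom s (values of act s outside dom s are irrelevant). *)
Definition partial_homeo (X : topologicalType) (D : set X) (a : X -> X) : Prop :=
  [/\ open D, open (a @` D), {within D, continuous a} &
      exists b : X -> X,
        [/\ forall x, D x -> b (a x) = x,
            forall y, (a @` D) y -> D (b y) /\ a (b y) = y &
            {within a @` D, continuous b}]].

Definition is_action (S : invSemigroup) (X : topologicalType)
  (dom : S -> set X) (act : S -> X -> X) : Prop :=
  [/\ forall s, partial_homeo (dom s) (act s),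
      forall s t, dom (mul s t) = [set x | dom t x /\ dom s (act t x)],
      forall s t x, dom (mul s t) x -> act (mul s t) x = act s (act t x),
      dom (one S) = setT /\ (forall x, act (one S) x = x) &
      dom (zero S) = set0].

(* S-equivariance of f : X -> \hat E for the canonical action
   c_g : U_{(star g)g} -> U_{gg^*}, c_g(phi)(e) = phi((star g) e g). *)
Definition equivariant_to_hatE (S : invSemigroup) (X : topologicalType)
  (dom : S -> set X) (act : S -> X -> X) (f : X -> hatE S) : Prop :=
  forall (s : S) (x : X),
    (dom s x <-> U (idem_ss s) (f x)) /\
    (dom s x -> forall e : idem S, proj1_sig (f (act s x)) e = proj1_sig (f x) (idem_conj s e)).

(* Main.v *)
Require Import Defs.
From mathcomp Require Import all_boot all_order.
From mathcomp Require Import all_classical topology.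
Set Implicit Arguments. Unset Strict Implicit.
Local Open Scope classical_set_scope.

Lemma sig_eq_P (A : Type) (P : A -> Prop) (a b : {x : A | P x}) :
  proj1_sig a = proj1_sig b -> a = b.
Proof. case: a b => a Ha [b Hb] /= E; subst; congr exist; exact: Prop_irrelevance. Qed.

Section Main.
Variables (S : invSemigroup) (X : topologicalType)
  (dom : S -> set X) (act : S -> X -> X).
Hypothesis Hact : is_action dom act.

Lemma act_idem (e : S) (x : X) : Defs.mul e e = e -> dom e x -> act e x = x.
Proof.
case: Hact => Hph Hdom Hmul _ _ He Dx.
case: (Hph e) => _ _ _ [b [Hb _ _]].
have Dxx : dom (Defs.mul e e) x by rewrite He.
have := Hmul e e x Dxx; rewrite He => E.
have := Hdom e e; rewrite He => Ed.
have Dy : dom e (act e x) by move: Dx; rewrite {1}Ed => -[].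
by rewrite -{2}(Hb x Dx) E Hb.
Qed.

Lemma dom_ss (s : S) (x : X) : dom s x <-> dom (Defs.mul (star s) s) x.
Proof.
case: Hact => _ Hdom _ _ _; split.
- move=> Dx. have := mul_star s; rewrite -mulA => E.
  have : dom (Defs.mul s (Defs.mul (star s) s)) x by rewrite E.
  by rewrite Hdom => -[].
- by rewrite Hdom => -[].
Qed.

Lemma dom_mulI (e f : S) (x : X) : Defs.mul f f = f -> (dom (Defs.mul e f) x <-> dom e x /\ dom f x).
Proof.
move=> Hf; case: Hact => _ Hdom _ _ _; rewrite Hdom /=; split.
- by move=> [Df De]; rewrite (act_idem Hf Df) in De.
- by move=> [De Df]; rewrite (act_idem Hf Df).
Qed.

Definition fE (x : X) (e : idem S) : bool := `[< dom (proj1_sig e) x >].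

Lemma fE_char x : is_character (fE x).
Proof.
case: Hact => _ _ _ [D1 _] D0; split.
- by rewrite /fE /= D0; apply/asboolP.
- by rewrite /fE /= D1; apply/asboolP.
- move=> [e He] [f Hf]; rewrite /fE /=.
  apply/asboolP/andP => [/(@dom_mulI _ _ _ Hf) [? ?]|[/asboolP ? /asboolP ?]].
    by split; apply/asboolP.
  by apply/(@dom_mulI _ _ _ Hf).
Qed.

Definition fmap (x : X) : hatE S := exist _ (fE x) (fE_char x).

Lemma star_idem (e : S) : Defs.mul e e = e -> Defs.mul (star e) e = e.
Proof.
move=> He.
have Ha := sss_proof e.
have -> : Defs.mul (star e) e = Defs.mul (Defs.mul (star e) e) e by rewrite -mulA He.
by rewrite (idem_comm Ha He) mulA mul_star.
Qed.

End Main.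

Theorem theorem2p22 (S : invSemigroup) (X : topologicalType)
  (dom : S -> set X) (act : S -> X -> X) :
  is_action dom act ->
  exists! f : X -> hatE S,
    continuous_to_hatE f /\ equivariant_to_hatE dom act f.
Proof.
move=> Hact.
have Hopen : forall e : S, open (dom e) by move=> e; case: Hact => Hph _ _ _ _; case: (Hph e).
exists (fmap Hact); split; [split|].
- move=> O HO; apply: (HO (fun O => open (fmap Hact @^-1` O))).
  + split.
    * by rewrite preimage_setT; exact: openT.
    * by move=> A B HA HB; rewrite preimage_setI; exact: openI.
    * by move=> I F HF; rewrite preimage_bigcup; exact: bigcup_open.
  + move=> _ [e ->]; rewrite /U.
    suff -> : fmap Hact @^-1` [set phi | proj1_sig phi e = true] = dom (proj1_sig e) by [].
    by apply/seteqP; split => y /=; rewrite /fE => /asboolP.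
- move=> s x; split.
  + rewrite /U /= /fE /=; split.
    * move=> Dx; apply: (introT (asboolP _)); exact: (proj1 (@dom_ss _ _ _ _ Hact s x) Dx).
    * by move=> /(elimT (asboolP _)) H; exact: (proj2 (@dom_ss _ _ _ _ Hact s x) H).
  + move=> Dx e; rewrite /fE /=.
    case: e => e He /=.
    have [_ Hdom _ _ _] := Hact.
    apply/asboolP/asboolP.
    * move=> De. rewrite Hdom /= Hdom /=; split=> //; split=> //.
      rewrite (act_idem Hact He De).
      by move: Dx => /(dom_ss Hact); rewrite Hdom => -[].
    * by rewrite Hdom /= Hdom /= => -[_ []].
- move=> g [_ Heq]; apply: funext => x; apply: sig_eq_P => /=.
  apply: funext => -[e He]; rewrite /fE /=.
  have [H1 _] := Heq e x.
  have Hi : idem_ss e = exist _ e He by apply: sig_eq_P; rewrite /= star_idem.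
  move: H1; rewrite /U /= Hi => H1.
  case Hg: (proj1_sig (g x) (exist _ e He)).
  + by apply/asboolP/H1.
  + by apply/asboolP => /H1; rewrite Hg.
Qed.
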